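(* Let $F/{\mathbf Q}$ be a totally real Galois extension of degree $2^d$. Suppose there is $\alpha\in F$ with $\operatorname{N}_{F/{\mathbf Q}}(\alpha)<0$ such that the ideal $(\alpha)$ is fixed by $\operatorname{Gal}(F/{\mathbf Q})$. Then for every assignment of signs $\pm1$ to the $2^d$ real embeddings of $F$ whose product is $1$, there is a unit of $\mathcal O_F$ whose signs under the real embeddings are exactly the given ones. *)

(* Defs.v *)
From HB Require Import structures.
From mathcomp Require Import all_boot all_order all_algebra all_fingroup all_field.
Set Implicit Arguments. Unset Strict Implicit. Unset Printing Implicit Defensive.
Import GRing.Theory Num.Theory.
Local Open Scope ring_scope.

Definition integral (L : fieldExtType rat) (x : L) : Prop :=
  exists p : {poly int}, p \is monic /\ root (map_poly (fun z : int => z%:~R : L) p) x.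

Definition OK_unit (L : fieldExtType rat) (x : L) : Prop :=
  x != 0 /\ integral x /\ integral x^-1.

(* the principal (fractional) ideal a O_L, as a subset of L *)
Definition pideal (L : fieldExtType rat) (a : L) : L -> Prop :=
  fun y => exists x, integral x /\ y = a * x.

(* Main.v *)
Require Import Defs.
From HB Require Import structures.
From mathcomp Require Import all_boot all_order all_algebra all_fingroup all_field.
From mathcomp Require Import pgroup sylow.
Import GRing.Theory Num.Theory.
Local Open Scope ring_scope.

Lemma Z2_addxx (z : 'Z_2) : z + z = 0.
Proof. by apply/val_inj; case: z => [[|[|//]]] /=. Qed.

Lemma Z2_cases (z : 'Z_2) : z = 0 \/ z = 1.
Proof. by case: z => [[|[|//]]] ? /=; [left|right]; apply/val_inj. Qed.

Definition Phi {gT : finGroupType} (v a : {ffun gT -> 'Z_2}) : {ffun gT -> 'Z_2} :=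
  [ffun s => \sum_t a t * v (t * s)%g].

Definition tra {gT : finGroupType} (x : {ffun gT -> 'Z_2}) (g : gT) : {ffun gT -> 'Z_2} :=
  [ffun u => x (u * g^-1)%g].

Lemma tra1 {gT : finGroupType} : (@tra gT)^~ 1%g =1 id.
Proof. by move=> x; apply/ffunP=> u; rewrite ffunE invg1 mulg1. Qed.

Lemma traM {gT : finGroupType} (x : {ffun gT -> 'Z_2}) : act_morph (@tra gT) x.
Proof. by move=> a b; apply/ffunP=> u; rewrite !ffunE invMg mulgA. Qed.

Definition traA (gT : finGroupType) := TotalAction (@tra1 gT) (@traM gT).

Lemma Phi_tra {gT : finGroupType} (v x : {ffun gT -> 'Z_2}) (g s : gT) :
  Phi v (tra x g) s = Phi v x (g * s)%g.
Proof.
rewrite !ffunE (reindex_inj (mulIg g)) /=.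
by apply: eq_bigr => t _; rewrite ffunE mulgK mulgA.
Qed.

Lemma Phi_tra_eq0 {gT : finGroupType} (v x : {ffun gT -> 'Z_2}) (g : gT) :
  (Phi v (tra x g) == 0) = (Phi v x == 0).
Proof.
apply/eqP/eqP=> H; apply/ffunP=> u.
  have := congr1 (fun f : {ffun gT -> 'Z_2} => f (g^-1 * u)%g) H.
  by rewrite /= Phi_tra mulKVg => ->; rewrite !ffunE.
by rewrite Phi_tra H !ffunE.
Qed.

Lemma sum_shift {gT : finGroupType} (v : {ffun gT -> 'Z_2}) (s : gT) :
  \sum_t v (t * s)%g = \sum_t v t.
Proof. by rewrite [RHS](reindex_inj (mulIg s)). Qed.

Lemma Phi_ker {gT : finGroupType} (v : {ffun gT -> 'Z_2})
  (Hv : \sum_t v t = 1) (H2 : pgroup 2 [set: gT]) (a : {ffun gT -> 'Z_2}) :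
  Phi v a = 0 -> a = 0.
Proof.
pose K := [set x | Phi v x == 0].
have actsK : [acts [set: gT], on K | traA gT].
  by apply/actsP=> g _ x; rewrite !inE /= Phi_tra_eq0.
have fixK : ('Fix_(K | traA gT)([set: gT]))%g = [set (0 : {ffun gT -> 'Z_2})].
  apply/setP=> x; rewrite !inE; apply/idP/idP.
    case/andP=> /eqP Kx /subsetP Fx.
    have cx : forall t, x t = x 1%g.
      move=> t; have := Fx t^-1%g (in_setT _); rewrite inE => /eqP E.
      have := congr1 (fun f : {ffun gT -> 'Z_2} => f 1%g) E.
      by rewrite ffunE invgK mul1g.
    have : Phi v x 1%g = x 1%g.
      by rewrite ffunE -[RHS]mulr1 -Hv -(sum_shift v 1%g) mulr_sumr; apply: eq_bigr => t _; rewrite cx.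
    rewrite Kx ffunE => x10; apply/eqP/ffunP=> t; by rewrite cx -x10 ffunE.
  move/eqP->; apply/andP; split.
    by apply/eqP/ffunP=> s; rewrite !ffunE big1 // => t _; rewrite ffunE mul0r.
  by apply/subsetP=> g _; rewrite inE; apply/eqP/ffunP=> u; rewrite !ffunE.
have := pgroup_fix_mod H2 actsK; rewrite fixK cards1.
move=> Hmod Ha; apply/eqP; apply/negPn/negP => nz.
have [t0 Ht0] : exists t0, a t0 != 0.
  apply/existsP; apply: contraR nz; rewrite negb_exists => /forallP H.
  by apply/eqP/ffunP=> t; rewrite ffunE; apply/eqP/negbNE/H.
have a1 : a t0 = 1 by case: (Z2_cases (a t0)) Ht0 => -> //; rewrite eqxx.
have aK : a \in K by rewrite inE Ha.
pose K0 := [set x in K | x t0 == 0].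
have PhiD : forall x y, Phi v (x + y) = Phi v x + Phi v y.
  by move=> x y; apply/ffunP=> s; rewrite !ffunE -big_split; apply: eq_bigr => t _; rewrite !ffunE mulrDl.
have img : (fun x : {ffun gT -> 'Z_2} => x + a) @: K0 = K :\: K0.
  apply/setP=> y; rewrite !inE; apply/imsetP/idP.
    case=> x; rewrite !inE => /andP[/eqP Kx /eqP x0] ->.
    by rewrite PhiD Kx Ha addr0 eqxx !ffunE x0 a1 add0r andbT.
  case/andP=> y1 /eqP Ky; exists (y + a); last by apply/ffunP=> u; rewrite !ffunE -addrA Z2_addxx addr0.
  rewrite !inE PhiD Ky Ha addr0 eqxx /= ffunE a1.
  by case: (Z2_cases (y t0)) y1 => ->; rewrite Ky ?eqxx //= Z2_addxx.
have := cardsID K0 K; rewrite -img card_imset; last exact: addIr.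
have -> : K :&: K0 = K0 by apply/setIidPr/subsetP=> x; rewrite inE => /andP[].
move=> HK; move: Hmod; rewrite -HK addnn /= => /eqP.
by rewrite modn2 odd_double.
Qed.

Lemma sum_shiftl {gT : finGroupType} (v : {ffun gT -> 'Z_2}) (t : gT) :
  \sum_s v (t * s)%g = \sum_s v s.
Proof. by rewrite [RHS](reindex_inj (mulgI t)). Qed.

Lemma Phi_onto {gT : finGroupType} (v : {ffun gT -> 'Z_2})
  (Hv : \sum_t v t = 1) (H2 : pgroup 2 [set: gT]) (f : {ffun gT -> 'Z_2}) :
  \sum_t f t = 0 -> exists a : {ffun gT -> 'Z_2}, \sum_t a t = 0 /\ Phi v a = f.
Proof.
move=> Hf.
have inj : injective (Phi v).
  move=> a b Hab; apply/eqP; rewrite -subr_eq0; apply/eqP; have K0 := @Phi_ker gT v Hv H2 (a - b); rewrite K0 //.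
  apply/ffunP=> s; rewrite !ffunE -[RHS](subrr (Phi v a s)) {2}Hab !ffunE -sumrB.
  by apply: eq_bigr => t _; rewrite !ffunE mulrBl.
pose E := [set a : {ffun gT -> 'Z_2} | \sum_t a t == 0].
have sub : Phi v @: E \subset E.
  apply/subsetP=> y /imsetP[a]; rewrite !inE => /eqP Ha ->.
  under eq_bigr do rewrite ffunE.
  rewrite exchange_big /=.
  under eq_bigr do rewrite -mulr_sumr sum_shiftl Hv mulr1.
  by rewrite Ha.
have EE : Phi v @: E = E.
  by apply/eqP; rewrite eqEcard sub (card_imset _ inj) leqnn.
have : f \in E by rewrite inE Hf.
rewrite -EE => /imsetP[a]; rewrite inE => /eqP Ha ->.
by exists a.
Qed.

Definition sgnZ (c : algC) : 'Z_2 := if c < 0 then 1 else 0.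

Lemma real_cases {c : algC} : c \is Num.real -> c != 0 -> (c < 0) || (0 < c).
Proof. by move=> rc nc; rewrite -real_neqr_lt // real0. Qed.

Lemma sgnZM (c d : algC) : c \is Num.real -> d \is Num.real -> c != 0 -> d != 0 ->
  sgnZ (c * d) = sgnZ c + sgnZ d.
Proof.
move=> rc rd nc nd; rewrite /sgnZ.
case/orP: (real_cases rc nc) => hc; case/orP: (real_cases rd nd) => hd.
- by rewrite (nmulr_rlt0 _ hc) hc hd (Order.POrderTheory.lt_gtF hd) Z2_addxx.
- by rewrite (nmulr_rlt0 _ hc) hc hd (Order.POrderTheory.lt_gtF hd) addr0.
- by rewrite (pmulr_rlt0 _ hc) (Order.POrderTheory.lt_gtF hc) hd add0r.
- by rewrite (pmulr_rlt0 _ hc) (Order.POrderTheory.lt_gtF hc) (Order.POrderTheory.lt_gtF hd) addr0.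
Qed.

Lemma integral_Aint {L : fieldExtType rat} (iota : {rmorphism L -> algC}) (z : L) :
  integral z <-> iota z \in Aint.
Proof.
split.
  case=> p [mp rp]; apply: (@root_monic_Aint (map_poly intr p)).
  - have := rmorph_root iota rp; rewrite -map_poly_comp.
    by rewrite (eq_map_poly (fun x => rmorph_int iota x)).
  - by rewrite monicE lead_coef_map_inj ?(monicP mp) //; exact: intr_inj.
  - by apply/polyOverP=> i; rewrite coef_map /= intr_int.
move=> Az; have [q Dq] := floorpP Az.
exists q; split.
  have := minCpoly_monic (iota z); rewrite Dq monicE lead_coef_map_inj //; last exact: intr_inj.
  by rewrite monicE -(eqr_int algC). 
apply/rootP; apply/eqP; rewrite -(fmorph_eq0 iota) -horner_map /= -map_poly_comp.
rewrite (eq_map_poly (fun x => rmorph_int iota x)) -Dq.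
exact: root_minCpoly.
Qed.

Lemma integral1 (L : fieldExtType rat) : integral (1 : L).
Proof.
exists ('X - 1); split; first by rewrite monicXsubC.
by rewrite rmorphB /= map_polyX map_polyC /= rmorph1 root_XsubC.
Qed.

Lemma integralM (L : fieldExtType rat) (iota : {rmorphism L -> algC}) (a b : L) :
  integral a -> integral b -> integral (a * b).
Proof.
move=> /(integral_Aint iota) ha /(integral_Aint iota) hb.
by apply/(integral_Aint iota); rewrite rmorphM rpredM.
Qed.

Lemma galT (L : splittingFieldType rat) : 'Gal({:L} / 1%VS)%g = [set: gal_of {:L}].
Proof. by apply/setP=> x; rewrite inE gal_kAut ?sub1v // kAut1E subvf. Qed.

Lemma psiD (a b : 'Z_2) : (-1) ^+ (val (a + b)) = (-1) ^+ (val a) * (-1) ^+ (val b) :> int.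
Proof. by case: (Z2_cases a) => ->; case: (Z2_cases b) => ->. Qed.

Lemma sgnZ_prod (I : finType) (P : pred I) (F : I -> algC) (G : I -> 'Z_2) :
  (forall i, P i -> [/\ F i \is Num.real, F i != 0 & sgnZ (F i) = G i]) ->
  sgnZ (\prod_(i | P i) F i) = \sum_(i | P i) G i.
Proof.
move=> H.
have : [&& (\prod_(i | P i) F i) \is Num.real, (\prod_(i | P i) F i) != 0 &
          sgnZ (\prod_(i | P i) F i) == \sum_(i | P i) G i].
  apply: (big_rec2 (fun y1 y2 => [&& y1 \is Num.real, y1 != 0 & sgnZ y1 == y2])).
    by rewrite real1 oner_eq0 /sgnZ ltr10.
  move=> i y1 y2 Pi /and3P[ry ny /eqP ey]; have [ri ni ei] := H i Pi.
  by rewrite rpredM ?mulf_neq0 //= sgnZM // ey ei.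
by case/and3P=> _ _ /eqP.
Qed.

Lemma psi_prod (I : finType) (P : pred I) (h : I -> int) (G : I -> 'Z_2) :
  (forall i, P i -> h i = (-1) ^+ (val (G i))) ->
  \prod_(i | P i) h i = (-1) ^+ (val (\sum_(i | P i) G i)).
Proof.
move=> H; apply: (big_rec2 (fun y1 y2 => y1 = (-1) ^+ (val y2))) => // i y1 y2 Pi ->.
by rewrite psiD H.
Qed.

Theorem lemma3p15 (L : splittingFieldType rat) (d : nat)
  (Hgal : galois 1%VS {:L})
  (Hdeg : \dim {:L} = (2 ^ d)%N)
  (Htr : forall (f : {rmorphism L -> algC}) (x : L), f x \is Num.real)
  (alpha : L)
  (Hnorm : exists r : rat, r < 0 /\ galNorm 1%VS {:L} alpha = r%:A)
  (Hfix : forall s, s \in 'Gal({:L} / 1%VS)%g ->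
            forall y : L, pideal (s alpha) y <-> pideal alpha y)
  (iota : {rmorphism L -> algC})
  (sgn : gal_of {:L} -> int)
  (Hsgn : forall s, s \in 'Gal({:L} / 1%VS)%g -> sgn s = 1 \/ sgn s = -1)
  (Hprod : \prod_(s in 'Gal({:L} / 1%VS)%g) sgn s = 1) :
  exists u : L, OK_unit u /\
    forall s, s \in 'Gal({:L} / 1%VS)%g -> Num.sg (iota (s u)) = (sgn s)%:~R.
Proof.
have GT := galT L.
have inG : forall s : gal_of {:L}, s \in 'Gal({:L} / 1%VS)%g by move=> s; rewrite GT inE.
have anz : alpha != 0.
  case: Hnorm => r [rlt0 Hr]; apply: contraTneq rlt0 => a0.
  move: Hr; rewrite a0 galNorm0 => /eqP; rewrite eq_sym scaler_eq0 oner_eq0 orbF => /eqP->.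
  by rewrite Order.POrderTheory.ltxx.
have real_s : forall (s : gal_of {:L}) z, iota (s z) \is Num.real.
  by move=> s z; exact: (Htr (iota \o s) z).
have nz_s : forall (s : gal_of {:L}) z, z != 0 -> iota (s z) != 0.
  by move=> s z; rewrite !fmorph_eq0.
pose v : {ffun gal_of {:L} -> 'Z_2} := [ffun s : gal_of {:L} => sgnZ (iota (s alpha))].
have Hv : \sum_t v t = 1.
  case: Hnorm => r [rlt0 Hr].
  have : sgnZ (iota (galNorm 1%VS {:L} alpha)) = \sum_t v t.
    rewrite /galNorm GT rmorph_prod (eq_bigl predT) => [|x]; last by rewrite inE.
    apply: sgnZ_prod => i _; rewrite real_s nz_s // ffunE; split=> //.
  by rewrite Hr alg_num_field fmorph_rat /sgnZ ltrq0 rlt0.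
pose f : {ffun gal_of {:L} -> 'Z_2} := [ffun s : gal_of {:L} => if sgn s == 1 then 0 else 1].
have Hf : \sum_t f t = 0.
  have : \prod_(s in 'Gal({:L} / 1%VS)%g) sgn s = (-1) ^+ (val (\sum_t f t)).
    rewrite GT (eq_bigl predT) => [|x]; last by rewrite inE.
    apply: psi_prod => i _; rewrite ffunE.
    by case: (Hsgn i (inG i)) => ->.
  rewrite Hprod; case: (Z2_cases (\sum_t f t)) => -> //.
have H2 : pgroup 2 [set: gal_of {:L}].
  have := galois_dim Hgal; rewrite /= dimv1 divn1 Hdeg GT => E.
  by rewrite /pgroup -E pnatX pnat_id.
have [a [Ha Pa]] := @Phi_onto _ v Hv H2 f Hf.
pose x t := (t : gal_of {:L}) alpha / alpha.
have tanz : forall t : gal_of {:L}, t alpha != 0 by move=> t; rewrite fmorph_eq0.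
have xnz : forall t, x t != 0 by move=> t; rewrite mulf_neq0 ?invr_eq0.
have xint : forall t, integral (x t) /\ integral (x t)^-1.
  move=> t; split.
    have [y [iy Ey]] : pideal alpha (t alpha).
      by apply/(Hfix t (inG t)); exists 1; split; [exact: integral1 | rewrite mulr1].
    by rewrite /x Ey mulrC (mulKf anz).
  have [y [iy Ey]] : pideal (t alpha) alpha.
    by apply/(Hfix t (inG t)); exists 1; split; [exact: integral1 | rewrite mulr1].
  by rewrite /x invfM invrK [X in _ * X]Ey mulKf ?tanz.
pose u := \prod_(t | a t == 1) x t.
have unz : u != 0 by apply/prodf_neq0 => t _.
exists u; split.
  split; first exact: unz.
  split.
    by apply: big_ind => //; [exact: integral1 | exact: integralM iota | move=> t _; case: (xint t)].
  rewrite -prodfV.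
  by apply: big_ind => //; [exact: integral1 | exact: integralM iota | move=> t _; case: (xint t)].
move=> s _.
have key : sgnZ (iota (s u)) = f s.
  have -> : sgnZ (iota (s u)) = \sum_(t | a t == 1) (v (t * s)%g + v s).
    rewrite /u !rmorph_prod.
    apply: sgnZ_prod => i _; rewrite real_s nz_s //; split=> //.
    rewrite /x rmorphM fmorphV /= -galM ?memvf // rmorphM fmorphV /=.
    by rewrite sgnZM ?rpredV ?real_s ?invr_eq0 ?nz_s // !ffunE /sgnZ invr_lt0.
  have -> : f s = \sum_t a t * v (t * s)%g by rewrite -Pa ffunE.
  rewrite big_mkcond /=.
  rewrite (eq_bigr (fun t => a t * (v (t * s)%g + v s))); last first.
    by move=> t _; case: (Z2_cases (a t)) => ->; rewrite ?mul1r ?mul0r ?eqxx.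
  rewrite (eq_bigr (fun t => a t * v (t * s)%g + a t * v s)) => [|t _]; last by rewrite mulrDr.
  by rewrite big_split /= -mulr_suml Ha mul0r addr0.
move: key; rewrite ffunE /sgnZ.
have [c_r c_nz] := (real_s s u, nz_s s u unz).
case: (Hsgn s (inG s)) => ->.
  rewrite eqxx; case: ifP => // cn _.
  by rewrite gtr0_sg //; move: (real_cases c_r c_nz); rewrite cn.
have -> : (-1 == 1 :> int) = false by [].
case: ifP => [cn _ | _ /eqP]; last by [].
by rewrite ltr0_sg.
Qed.
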